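(* Let $M>0$ and $E\in(\sqrt{25/27},1)$. Let $W(r;H,L)=\frac12\bigl(\frac{L^2}{r^2}-2H\bigr)\bigl(1-\frac{2M}{r}\bigr)$ for $r>2M$, $Z(r;H,L)=W(r;H,L)-\frac12E^2$, $\widetilde\Lambda=\{(H,L): H<0,\ L>4\sqrt2\sqrt{-H}M\}$, $r_0(H,L)=\dfrac{L^2+L\sqrt{L^2+24HM^2}}{-4HM}$, $\omega_0(H,L)=-W(r_0(H,L);H,L)$, and $$\Lambda_E=\Bigl\{(H,L)\in\widetilde\Lambda:\ -\omega_0(H,L)<\tfrac12E^2<-H\Bigr\}.$$ Then $$\Lambda_E=\Bigl\{(H,L)\in\mathbb{R}^2:\ -\tfrac{27}{50}E^2<H<-\tfrac12E^2,\ \ 4\sqrt2\sqrt{-H}\,M<L<\sqrt{-H}\,M\,\zeta^{-1}\Bigl(\frac{E^2}{-2H}\Bigr)\Bigr\}.$$ Moreover: (i) for every $(H,L)\in\Lambda_E$, $Z(r_0(H,L);H,L)<0$, $Z'(r_0(H,L);H,L)=0$, $Z''(r_0(H,L);H,L)>0$; (ii) there exist continuous functions $r_-,r_+\colon\Lambda_E\to(0,+\infty)$ with $r_-<r_0<r_+$ such that, for every $(H,L)\in\Lambda_E$, $Z(r_\pm(H,L);H,L)=0$ and $Z'(r;H,L)(r-r_0(H,L))>0$ for every $r\in[r_-(H,L),r_+(H,L)]\setminus\{r_0(H,L)\}$.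
   Context: Derivatives ${}'$ are with respect to $r$. The function $\zeta\colon(4\sqrt2,+\infty)\to\mathbb{R}$ is $\zeta(u)=\dfrac{u^4-20u^2+32+u(u^2-8)\sqrt{u^2-24}}{u^4-18u^2+u(u^2-6)\sqrt{u^2-24}}$; it is strictly increasing with image $(25/27,1)$, and $\zeta^{-1}$ denotes its inverse. *)

(* Defs.v *)
From Stdlib Require Import Reals Lra ClassicalEpsilon.
From Coquelicot Require Import Coquelicot.
Open Scope R_scope.

(* zeta : (4 sqrt 2, +oo) -> R  (formula evaluated for any real u) *)
Definition zeta (u : R) : R :=
  (u^4 - 20*u^2 + 32 + u*(u^2 - 8)*sqrt (u^2 - 24)) /
  (u^4 - 18*u^2 + u*(u^2 - 6)*sqrt (u^2 - 24)).

(* Inverse of zeta: the u in (4 sqrt 2, +oo) with zeta u = y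
   (unique for y in (25/27,1) since zeta is strictly increasing there). *)
Definition zeta_inv (y : R) : R :=
  epsilon (inhabits 0) (fun u => 4 * sqrt 2 < u /\ zeta u = y).

Definition W (M H L r : R) : R :=
  / 2 * (L^2 / r^2 - 2*H) * (1 - 2*M / r).

Definition Zf (M E H L r : R) : R := W M H L r - / 2 * E^2.

Definition r0 (M H L : R) : R :=
  (L^2 + L * sqrt (L^2 + 24*H*M^2)) / (- 4*H*M).

Definition omega0 (M H L : R) : R := - W M H L (r0 M H L).

Definition LambdaT (M H L : R) : Prop :=
  H < 0 /\ 4 * sqrt 2 * sqrt (- H) * M < L.

Definition LambdaE (M E H L : R) : Prop :=
  LambdaT M H L /\ - omega0 M H L < / 2 * E^2 < - H.

(* Main.v *)
Require Import Defs.
From Stdlib Require Import Reals Lra Nsatz ClassicalEpsilon.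
From Coquelicot Require Import Coquelicot.
Open Scope R_scope.

Definition ff (x : R) : R := (x-2)^2/(x*(x-3)).
Definition Xu (u : R) : R := (u^2 + u*sqrt(u^2-24))/4.

Lemma ff_alt x : 4 < x -> ff x = 1 - (x-4)/(x*(x-3)).
Proof. intros. unfold ff. field. split; nra. Qed.

Lemma ff_lt1 x : 4 < x -> ff x < 1.
Proof. intros. rewrite ff_alt by lra.
assert (0 < (x-4)/(x*(x-3))) by (apply Rdiv_lt_0_compat; nra). lra. Qed.

Lemma ff_mono x y : 6 < x -> x < y -> ff x < ff y.
Proof. intros. rewrite !ff_alt by lra.
assert ((y-4)/(y*(y-3)) < (x-4)/(x*(x-3))); [|lra].
assert (E: (x-4)/(x*(x-3)) - (y-4)/(y*(y-3)) = ((y-x)*((x-4)*(y-4)-4))/((x*(x-3))*(y*(y-3)))) by (field; split; nra).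
assert (0 < ((y-x)*((x-4)*(y-4)-4))/((x*(x-3))*(y*(y-3)))); [|lra].
apply Rdiv_lt_0_compat; [apply Rmult_lt_0_compat|apply Rmult_lt_0_compat]; nra. Qed.

Lemma ff12 : ff 12 = 25/27.
Proof. unfold ff. field. Qed.

Lemma sq2 : sqrt 2 * sqrt 2 = 2.
Proof. apply sqrt_sqrt; lra. Qed.

Lemma gt4s2 u : 4 * sqrt 2 < u -> 32 < u^2 /\ 0 < u.
Proof. intros. pose proof sq2. pose proof (sqrt_pos 2). split; nra. Qed.

Lemma gt4s2_conv u : 32 < u^2 -> 0 < u -> 4 * sqrt 2 < u.
Proof. intros. pose proof sq2. pose proof (sqrt_pos 2).
destruct (Rlt_or_le (4*sqrt 2) u); auto. nra. Qed.

Lemma div_eq a b c d : b <> 0 -> d <> 0 -> a*d = c*b -> a/b = c/d.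
Proof. intros. unfold Rdiv. replace (a * /b) with (a*d * /(b*d)) by (field; auto).
rewrite H1. field. auto. Qed.

Lemma Xu_facts u : 32 < u^2 -> 0 < u ->
  12 < Xu u /\ u^2/4 <= Xu u /\ 2*(Xu u)^2 - u^2*Xu u + 3*u^2 = 0 /\ zeta u = ff (Xu u).
Proof. intros Hu Hu0.
remember (sqrt (u^2-24)) as s eqn:Hsd.
assert (Hs : s*s = u*u-24) by (rewrite Hsd, sqrt_sqrt; nra).
assert (Hs0 : 0 <= s) by (rewrite Hsd; apply sqrt_pos).
assert (Hus : 16 < u*s) by nra.
assert (HX : 4 * Xu u = u*u + u*s) by (unfold Xu; rewrite <- Hsd; field).
set (X := Xu u) in *. clearbody X.
assert (HX12 : 12 < X) by nra.
assert (HQ : 2*X*X - u*u*X + 3*(u*u) = 0) by (clear - Hs HX; nsatz).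
split; [nra|]. split; [nra|]. split; [nra|].
unfold zeta, ff. rewrite <- Hsd.
assert (HD : 0 < u^4 - 18*u^2 + u*(u^2-6)*s).
{ assert (0 <= u*(u^2-6)*s) by (apply Rmult_le_pos; [apply Rmult_le_pos|]; nra). nra. }
assert (HXX : 0 < X*(X-3)) by nra.
apply div_eq; [nra|nra|].
simpl. clear - Hs HX. nsatz.
Qed.


Lemma Xu_mono u v : 32 < u^2 -> 0 < u -> u < v -> Xu u < Xu v.
Proof. intros. unfold Xu.
assert (sqrt (u^2-24) <= sqrt (v^2-24)) by (apply sqrt_le_1; nra).
pose proof (sqrt_pos (u^2-24)).
assert (u * sqrt (u^2-24) <= v * sqrt (v^2-24)) by nra. nra. Qed.

Lemma zeta_mono u v : 4*sqrt 2 < u -> u < v -> zeta u < zeta v.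
Proof. intros. destruct (gt4s2 u H) as [H1 H2].
assert (32 < v^2 /\ 0 < v) as [H3 H4] by nra.
destruct (Xu_facts u H1 H2) as (A1 & _ & _ & A4).
destruct (Xu_facts v H3 H4) as (B1 & _ & _ & B4).
rewrite A4, B4. apply ff_mono; [lra|]. apply Xu_mono; auto. Qed.

Lemma zeta_gt u : 4*sqrt 2 < u -> 25/27 < zeta u.
Proof. intros. destruct (gt4s2 u H) as [H1 H2].
destruct (Xu_facts u H1 H2) as (A1 & _ & _ & A4). rewrite A4, <- ff12.
apply ff_mono; lra. Qed.

Lemma root_uniq w t t' : 2*t^2 - w*t + 3*w = 0 -> 2*t'^2 - w*t' + 3*w = 0 ->
  w/4 <= t -> w/4 <= t' -> t = t'.
Proof. intros.
assert ((t-t')*(2*(t+t') - w) = 0) by nra.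
destruct (Rmult_integral _ _ H3); lra. Qed.

Lemma zeta_exists y : 25/27 < y < 1 -> exists u, 4*sqrt 2 < u /\ zeta u = y.
Proof. intros Hy.
set (Q := fun x => (1-y)*x^2 + (3*y-4)*x + 4).
assert (Hc : continuity Q) by (intro; unfold Q; reg).
assert (Hlt : 12 < 12 + 4/(1-y)) by (assert (0 < 4/(1-y)) by (apply Rdiv_lt_0_compat; lra); lra).
assert (HQ12 : Q 12 < 0) by (unfold Q; nra).
assert (HQb : 0 < Q (12 + 4/(1-y))).
{ unfold Q. set (b := 12 + 4/(1-y)) in *.
  assert (Hb : (1-y)*b = 12*(1-y) + 4) by (unfold b; field; lra).
  nra. }
destruct (IVT Q _ _ Hc Hlt HQ12 HQb) as [x [Hx HQx]].
assert (Hx12 : 12 < x) by (destruct (Req_dec x 12); [subst; lra | lra]).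
unfold Q in HQx.
set (w := 2*x^2/(x-3)).
assert (Hwx : w*(x-3) = 2*x^2) by (unfold w; field; lra).
assert (Hw : 32 < w) by nra.
exists (sqrt w).
assert (Hu2 : (sqrt w)^2 = w) by (simpl; rewrite Rmult_1_r, sqrt_sqrt; lra).
assert (Hu0 : 0 < sqrt w) by (apply sqrt_lt_R0; lra).
split. apply gt4s2_conv; [rewrite Hu2; lra| lra].
assert (32 < (sqrt w)^2) by (rewrite Hu2; lra).
destruct (Xu_facts (sqrt w)) as (_ & X2 & X3 & X4); auto.
rewrite X4. rewrite Hu2 in X2, X3.
assert (Xu (sqrt w) = x) as ->.
{ apply (root_uniq w); auto; nra. }
unfold ff. apply (Rmult_eq_reg_r (x*(x-3))); [|nra].
field_simplify; [|nra]. nra. Qed.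

Lemma zeta_inv_spec y : 25/27 < y < 1 -> 4*sqrt 2 < zeta_inv y /\ zeta (zeta_inv y) = y.
Proof. intros. unfold zeta_inv. apply epsilon_spec. apply zeta_exists; auto. Qed.

Lemma zeta_inv_cmp y u : 25/27 < y < 1 -> 4*sqrt 2 < u -> (u < zeta_inv y <-> zeta u < y).
Proof. intros Hy Hu. destruct (zeta_inv_spec y Hy) as [H1 H2]. split; intros.
- rewrite <- H2. apply zeta_mono; auto.
- destruct (Rlt_or_le u (zeta_inv y)); auto.
  destruct (Req_dec u (zeta_inv y)). subst. lra.
  assert (zeta (zeta_inv y) < zeta u) by (apply zeta_mono; auto; lra). lra. Qed.


Definition Pp (M H L r : R) : R := -2*H*M*r^2 - L^2*r + 3*M*L^2.
Definition Cp (M E H L r : R) : R := (L^2 - 2*H*r^2)*(r - 2*M) - E^2*r^3.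

Lemma r0_facts M H L : 0<M -> H<0 -> 0<L -> 32*(-H)*M^2 < L^2 ->
  Pp M H L (r0 M H L) = 0 /\ 8*M < r0 M H L /\ 0 < -4*H*M*r0 M H L - L^2 /\
  L^2/(-4*H*M) <= r0 M H L.
Proof. intros HM HH HL HL2.
remember (sqrt (L^2+24*H*M^2)) as q eqn:Hq.
assert (Hqq : q*q = L*L+24*H*(M*M)) by (rewrite Hq, sqrt_sqrt; nra).
assert (Hq0 : 0 < q) by (rewrite Hq; apply sqrt_lt_R0; nra).
assert (Hr : r0 M H L * (-4*H*M) = L*L + L*q) by (unfold r0; rewrite <- Hq; field; nra).
remember (r0 M H L) as r. clear Heqr.
assert (HLq : 0 < L*q) by nra.
assert (Hsl : -4*H*M*r - L^2 = L*q) by nra.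
assert (Hvx : L^2/(-4*H*M) <= r).
{ apply Rle_div_l; nra. }
assert (HP : (2*(-4*H*M)) * Pp M H L r = 0).
{ unfold Pp. simpl. clear - Hqq Hr. nsatz. }
split. { apply Rmult_integral in HP. destruct HP; [nra|auto]. }
split; [|split; auto; lra].
assert (8*M < L^2/(-4*H*M)); [|lra].
apply (Rlt_div_r (8*M) (L^2) (-4*H*M)). nra. replace (8*M*(-4*H*M)) with (32*(-H)*M^2) by ring. lra.
Qed.

Lemma W_circ M H L r : 0 < M -> 3*M < r -> Pp M H L r = 0 -> W M H L r = -H * ff (r/M).
Proof. intros HM Hr HP. unfold Pp in HP.
assert (HL : L^2 = -2*H*M*r^2/(r-3*M)) by (apply (Rmult_eq_reg_r (r-3*M)); [field_simplify; nra | lra]).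
unfold W, ff. rewrite HL. field. repeat split; nra. Qed.

Lemma Xu_r0 M H L : 0<M -> H<0 -> 0<L -> 32*(-H)*M^2 < L^2 ->
  Xu (L/(sqrt (-H)*M)) = r0 M H L / M.
Proof. intros HM HH HL HL2.
destruct (r0_facts M H L) as (P1 & P2 & P3 & P4); auto.
set (u := L/(sqrt (-H)*M)).
assert (Hsh : sqrt (-H) * sqrt (-H) = -H) by (apply sqrt_sqrt; lra).
assert (Hsh0 : 0 < sqrt (-H)) by (apply sqrt_lt_R0; lra).
assert (Hu2 : u^2 = L^2/((sqrt (-H)*sqrt (-H))*M^2)) by (unfold u; field; nra).
rewrite Hsh in Hu2.
assert (Hu0 : 0 < u) by (unfold u; apply Rdiv_lt_0_compat; nra).
assert (Hu32 : 32 < u^2) by (rewrite Hu2; apply (Rlt_div_r 32 (L^2) (-H*M^2)); nra).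
destruct (Xu_facts u Hu32 Hu0) as (_ & X2 & X3 & _).
apply (root_uniq (u^2)); auto.
- rewrite Hu2. replace (2 * (r0 M H L / M) ^ 2 - L ^ 2 / (- H * M ^ 2) * (r0 M H L / M) + 3 * (L ^ 2 / (- H * M ^ 2)))
  with (Pp M H L (r0 M H L) / (-H*M^3)) by (unfold Pp; field; split; nra).
  rewrite P1. unfold Rdiv. ring.
- rewrite Hu2. replace (L ^ 2 / (- H * M ^ 2) / 4) with (L^2/(-4*H*M)/M) by (field; split; nra).
  unfold Rdiv at 2. unfold Rdiv at 2. apply Rmult_le_compat_r; [apply Rlt_le, Rinv_0_lt_compat; lra| auto].
Qed.


Lemma W_r0_zeta M H L : 0 < M -> H < 0 -> 4 * sqrt 2 * sqrt (-H) * M < L ->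
  0 < L /\ 32*(-H)*M^2 < L^2 /\ 4*sqrt 2 < L/(sqrt (-H)*M) /\
  W M H L (r0 M H L) = -H * zeta (L/(sqrt (-H)*M)).
Proof. intros HM HH HL.
assert (Hsh : sqrt (-H) * sqrt (-H) = -H) by (apply sqrt_sqrt; lra).
assert (Hsh0 : 0 < sqrt (-H)) by (apply sqrt_lt_R0; lra).
pose proof sq2. assert (0 < sqrt 2) by (apply sqrt_lt_R0; lra).
assert (HL0 : 0 < L) by (assert (0 < 4 * sqrt 2 * sqrt (-H) * M) by (repeat apply Rmult_lt_0_compat; lra); lra).
assert (HL2 : 32*(-H)*M^2 < L^2).
{ assert (0 < 4 * sqrt 2 * sqrt (-H) * M) by (repeat apply Rmult_lt_0_compat; lra).
  replace (32*(-H)*M^2) with ((4 * sqrt 2 * sqrt (-H) * M)^2). nra.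
  replace ((4 * sqrt 2 * sqrt (-H) * M)^2) with (16 * (sqrt 2 * sqrt 2) * (sqrt (-H) * sqrt (-H)) * M^2) by ring.
  rewrite Hsh, H0. ring. }
assert (Hu : 4*sqrt 2 < L/(sqrt (-H)*M)).
{ apply (Rlt_div_r (4*sqrt 2) L (sqrt (-H)*M)). nra. rewrite <- Rmult_assoc. lra. }
split; auto. split; auto. split; auto.
destruct (r0_facts M H L) as (P1 & P2 & P3 & P4); auto.
rewrite W_circ; auto; [|lra].
rewrite <- Xu_r0; auto.
destruct (gt4s2 _ Hu) as [U1 U2].
destruct (Xu_facts _ U1 U2) as (_ & _ & _ & X4). rewrite X4. auto.
Qed.

Lemma part1 M E H L : 0 < M ->
  (LambdaE M E H L <->
     (- (27/50) * E^2 < H < - / 2 * E^2 /\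
      4 * sqrt 2 * sqrt (- H) * M < L < sqrt (- H) * M * zeta_inv (E^2 / (- 2 * H)))).
Proof. intros HM. unfold LambdaE, LambdaT, omega0. split.
- intros [[HH HL] [A1 A2]].
  destruct (W_r0_zeta M H L) as (L0 & L2 & Hu & HW); auto.
  rewrite Ropp_involutive, HW in A1.
  set (u := L/(sqrt (-H)*M)) in *.
  set (y := E^2/(-2*H)).
  pose proof (zeta_gt u Hu).
  assert (Hzy : zeta u < y) by (apply (Rlt_div_r (zeta u) (E^2) (-2*H)); nra).
  assert (Hy1 : y < 1) by (apply (Rlt_div_l (E^2) 1 (-2*H)); nra).
  assert (Hy0 : 25/27 < y) by lra.
  assert (E1 : 25/27 * (-2*H) < E^2) by (apply (Rlt_div_r (25/27) (E^2) (-2*H)); [lra| auto]).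
  split; [split; lra|]. split; auto.
  assert (Hsh0 : 0 < sqrt (-H)) by (apply sqrt_lt_R0; lra).
  assert (u < zeta_inv y) by (apply zeta_inv_cmp; auto).
  replace L with (sqrt (-H) * M * u) at 1 by (unfold u; field; nra).
  apply Rmult_lt_compat_l; [nra | auto].
- intros [[H1 H2] [H3 H4]].
  assert (HH : H < 0) by (assert (0 < E^2) by nra; lra).
  destruct (W_r0_zeta M H L) as (L0 & L2 & Hu & HW); auto.
  split; [split; auto|].
  rewrite Ropp_involutive, HW.
  set (u := L/(sqrt (-H)*M)) in *.
  set (y := E^2/(-2*H)) in *.
  assert (Hy1 : y < 1) by (apply (Rlt_div_l (E^2) 1 (-2*H)); nra).
  assert (Hy0 : 25/27 < y) by (apply (Rlt_div_r (25/27) (E^2) (-2*H)); nra).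
  assert (Hsh0 : 0 < sqrt (-H)) by (apply sqrt_lt_R0; lra).
  assert (u < zeta_inv y).
  { unfold u. apply (Rlt_div_l L (zeta_inv y) (sqrt (-H)*M)). nra. lra. }
  assert (zeta u < y) by (apply zeta_inv_cmp; auto; lra).
  assert (zeta u * (-2*H) < E^2) by (apply (Rlt_div_r (zeta u) (E^2) (-2*H)); [lra|auto]).
  split; nra.
Qed.


Lemma Zf_C M E H L r : r <> 0 -> Zf M E H L r = Cp M E H L r / (2*r^3).
Proof. intros. unfold Zf, W, Cp. field. auto. Qed.

Lemma Zf_deriv M E H L r : r <> 0 -> is_derive (Zf M E H L) r (Pp M H L r / r^4).
Proof. intros. unfold Zf, W. auto_derive. repeat split; auto; apply Rmult_integral_contrapositive; split; auto; lra. unfold Pp. field. auto. Qed.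

Lemma Dz_deriv M H L r : r <> 0 ->
  is_derive (fun r => Pp M H L r / r^4) r ((-4*H*M*r - L^2)/r^4 - 4*Pp M H L r/r^5).
Proof. intros. unfold Pp. auto_derive. repeat (apply Rmult_integral_contrapositive_currified); auto; lra. field. auto. Qed.

Lemma Derive_Zf M E H L r : r <> 0 -> Derive (Zf M E H L) r = Pp M H L r / r^4.
Proof. intros. apply is_derive_unique, Zf_deriv; auto. Qed.

Lemma Derive2_Zf M E H L r : 0 < r ->
  Derive (Derive (Zf M E H L)) r = (-4*H*M*r - L^2)/r^4 - 4*Pp M H L r/r^5.
Proof. intros. rewrite (Derive_ext_loc _ (fun r => Pp M H L r / r^4)).
apply is_derive_unique, Dz_deriv; lra.
exists (mkposreal r H0). intros t Ht. apply Derive_Zf.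
unfold ball in Ht; simpl in Ht; unfold AbsRing_ball, abs, minus, plus, opp in Ht; simpl in Ht.
apply Rabs_def2 in Ht. lra. Qed.

Lemma Zf_decr M E H L a b : 0 < a -> a < b -> (forall c, a <= c <= b -> Pp M H L c < 0) ->
  Zf M E H L b < Zf M E H L a.
Proof. intros. destruct (MVT_cor2 (Zf M E H L) (fun r => Pp M H L r / r^4) a b) as [c [Hc1 Hc2]]; auto.
intros. apply is_derive_Reals, Zf_deriv. lra.
assert (Pp M H L c / c^4 < 0).
{ assert (0 < c^4) by (apply pow_lt; lra). assert (Pp M H L c < 0) by (apply H2; lra).
  unfold Rdiv. assert (0 < / c^4) by (apply Rinv_0_lt_compat; auto). nra. }
nra. Qed.

Lemma Zf_incr M E H L a b : 0 < a -> a < b -> (forall c, a <= c <= b -> 0 < Pp M H L c) ->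
  Zf M E H L a < Zf M E H L b.
Proof. intros. destruct (MVT_cor2 (Zf M E H L) (fun r => Pp M H L r / r^4) a b) as [c [Hc1 Hc2]]; auto.
intros. apply is_derive_Reals, Zf_deriv. lra.
assert (0 < Pp M H L c / c^4).
{ assert (0 < c^4) by (apply pow_lt; lra). assert (0 < Pp M H L c) by (apply H2; lra).
  apply Rdiv_lt_0_compat; auto. }
nra. Qed.

Lemma P_conv M H L a b z : H < 0 -> 0 < M -> a <= z <= b -> Pp M H L a < 0 -> Pp M H L b < 0 -> Pp M H L z < 0.
Proof. intros. destruct (Req_dec a b). subst. assert (z = b) by lra. subst; auto.
assert (E: (b-a)*Pp M H L z = (b-z)*Pp M H L a + (z-a)*Pp M H L b + (-2*H*M)*(z-a)*(z-b)*(b-a)) by (unfold Pp; ring).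
assert ((b-z)*Pp M H L a + (z-a)*Pp M H L b < 0).
{ destruct (Req_dec z a). subst. nra. nra. }
assert ((-2*H*M)*(z-a)*(z-b)*(b-a) <= 0).
{ assert (0 <= -2*H*M) by nra. assert ((z-a)*(z-b) <= 0) by nra.
  assert (0 <= b - a) by lra.
  replace ((-2*H*M)*(z-a)*(z-b)*(b-a)) with ((-2*H*M)*((z-a)*(z-b))*(b-a)) by ring.
  assert ((-2*H*M)*((z-a)*(z-b)) <= 0) by nra. nra. }
assert ((b-a)*Pp M H L z < 0) by lra. nra. Qed.

Lemma P_conv0 M H L a b z : H < 0 -> 0 < M -> a <= z < b -> Pp M H L a < 0 -> Pp M H L b = 0 -> Pp M H L z < 0.
Proof. intros.
assert (E: (b-a)*Pp M H L z = (b-z)*Pp M H L a + (z-a)*Pp M H L b + (-2*H*M)*(z-a)*(z-b)*(b-a)) by (unfold Pp; ring).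
rewrite H4 in E.
assert ((b-z)*Pp M H L a < 0) by nra.
assert ((-2*H*M)*(z-a)*(z-b)*(b-a) <= 0).
{ assert (0 <= -2*H*M) by nra. assert ((z-a)*(z-b) <= 0) by nra.
  assert (0 <= b - a) by lra.
  replace ((-2*H*M)*(z-a)*(z-b)*(b-a)) with ((-2*H*M)*((z-a)*(z-b))*(b-a)) by ring.
  assert ((-2*H*M)*((z-a)*(z-b)) <= 0) by nra. nra. }
assert ((b-a)*Pp M H L z < 0) by lra. nra. Qed.

Lemma mul_pn a b : 0 <= a -> b <= 0 -> a*b <= 0.
Proof. intros. nra. Qed.

Lemma P_right M H L K a z : H < 0 -> 0 < M -> K < a <= z -> Pp M H L K < 0 -> 0 < Pp M H L a -> 0 < Pp M H L z.
Proof. intros.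
assert (E1 : Pp M H L a - Pp M H L K = (a-K)*(-2*H*M*(a+K) - L^2)) by (unfold Pp; ring).
assert (S1 : 0 < -2*H*M*(a+K) - L^2).
{ destruct (Rlt_or_le 0 (-2*H*M*(a+K) - L^2)); auto.
  assert ((a-K)*(-2*H*M*(a+K) - L^2) <= 0) by (apply mul_pn; lra). lra. }
assert (E2 : Pp M H L z - Pp M H L a = (z-a)*(-2*H*M*(z+a) - L^2)) by (unfold Pp; ring).
assert (-2*H*M*(a+K) <= -2*H*M*(z+a)) by (apply Rmult_le_compat_l; nra).
assert (0 <= (z-a)*(-2*H*M*(z+a) - L^2)) by (apply Rmult_le_pos; lra).
lra. Qed.

Lemma P_gt_r0 M H L r : H < 0 -> 0 < M -> 0 < -4*H*M*r0 M H L - L^2 -> Pp M H L (r0 M H L) = 0 ->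
  r0 M H L < r -> 0 < Pp M H L r.
Proof. intros.
assert (E2 : Pp M H L r - Pp M H L (r0 M H L) = (r-r0 M H L)*(-2*H*M*(r+r0 M H L) - L^2)) by (unfold Pp; ring).
assert (-4*H*M*r0 M H L = -2*H*M*(r0 M H L + r0 M H L)) by ring.
assert (-2*H*M*(r0 M H L + r0 M H L) <= -2*H*M*(r + r0 M H L)) by (apply Rmult_le_compat_l; nra).
assert (0 < (r-r0 M H L)*(-2*H*M*(r+r0 M H L) - L^2)) by (apply Rmult_lt_0_compat; lra).
lra. Qed.


Lemma LE_facts M E H L : 0 < M -> LambdaE M E H L ->
  H < 0 /\ 0 < L /\ 32*(-H)*M^2 < L^2 /\ E^2/2 < -H /\
  Pp M H L (4*M) < 0 /\ 0 < Cp M E H L (4*M) /\ Cp M E H L (r0 M H L) < 0 /\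
  Zf M E H L (r0 M H L) < 0 /\
  Pp M H L (r0 M H L) = 0 /\ 8*M < r0 M H L /\ 0 < -4*H*M*r0 M H L - L^2.
Proof. intros HM [[HH HL] [A1 A2]].
destruct (W_r0_zeta M H L) as (L0 & L2 & _ & _); auto.
destruct (r0_facts M H L) as (P1 & P2 & P3 & P4); auto.
unfold omega0 in A1. rewrite Ropp_involutive in A1.
assert (HZ : Zf M E H L (r0 M H L) < 0) by (unfold Zf; lra).
assert (HC : Cp M E H L (r0 M H L) < 0).
{ rewrite Zf_C in HZ by lra. 
  assert (0 < 2 * r0 M H L ^3) by (assert (0 < r0 M H L^3) by (apply pow_lt; lra); lra).
  apply (Rmult_lt_compat_r (2 * r0 M H L ^3)) in HZ; auto.
  unfold Rdiv in HZ. rewrite Rmult_assoc, Rinv_l, Rmult_1_r, Rmult_0_l in HZ by lra. auto. }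
repeat split; auto; try lra.
- unfold Pp. nra.
- unfold Cp. assert (L^2 + 32*(-H)*M^2 > 32*E^2*M^2) by nra.
  replace ((L ^ 2 - 2 * H * (4 * M) ^ 2) * (4 * M - 2 * M) - E ^ 2 * (4 * M) ^ 3)
   with (2*M*(L^2 + 32*(-H)*M^2 - 32*E^2*M^2)) by ring.
  apply Rmult_lt_0_compat; lra.
Qed.

Lemma part2 M E H L : 0 < M -> LambdaE M E H L ->
     Zf M E H L (r0 M H L) < 0 /\
     Derive (Zf M E H L) (r0 M H L) = 0 /\
     0 < Derive (Derive (Zf M E H L)) (r0 M H L).
Proof. intros HM HE. destruct (LE_facts M E H L) as (F1 & F2 & F3 & F4 & F5 & F6 & F7 & F8 & F9 & F10 & F11); auto.
split; auto. split.
- rewrite Derive_Zf by lra. rewrite F9. unfold Rdiv. ring.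
- rewrite Derive2_Zf by lra. rewrite F9. unfold Rdiv. rewrite Rmult_0_r, Rmult_0_l, Rminus_0_r.
  apply Rmult_lt_0_compat; auto. apply Rinv_0_lt_compat, pow_lt. lra.
Qed.

Definition rmS M E H L r := 4*M < r /\ Pp M H L r < 0 /\ Cp M E H L r = 0.
Definition rpS M E H L r := 4*M < r /\ 0 < Pp M H L r /\ Cp M E H L r = 0.

Lemma C_Zf0 M E H L r : 0 < r -> Cp M E H L r = 0 -> Zf M E H L r = 0.
Proof. intros. rewrite Zf_C by lra. rewrite H1. unfold Rdiv. ring. Qed.

Lemma rm_uniq M E H L z1 z2 : 0 < M -> LambdaE M E H L -> rmS M E H L z1 -> rmS M E H L z2 -> z1 = z2.
Proof. intros HM HE [A1 [A2 A3]] [B1 [B2 B3]].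
destruct (LE_facts M E H L) as (F1 & _); auto.
apply C_Zf0 in A3; [|lra]. apply C_Zf0 in B3; [|lra].
destruct (Rtotal_order z1 z2) as [h|[h|h]]; auto.
- assert (Zf M E H L z2 < Zf M E H L z1); [|lra].
  apply Zf_decr; try lra. intros. apply (P_conv M H L z1 z2); auto.
- assert (Zf M E H L z1 < Zf M E H L z2); [|lra].
  apply Zf_decr; try lra. intros. apply (P_conv M H L z2 z1); auto.
Qed.

Lemma rp_uniq M E H L z1 z2 : 0 < M -> LambdaE M E H L -> rpS M E H L z1 -> rpS M E H L z2 -> z1 = z2.
Proof. intros HM HE [A1 [A2 A3]] [B1 [B2 B3]].
destruct (LE_facts M E H L) as (F1 & _ & _ & _ & F5 & _); auto.
apply C_Zf0 in A3; [|lra]. apply C_Zf0 in B3; [|lra].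
destruct (Rtotal_order z1 z2) as [h|[h|h]]; auto.
- assert (Zf M E H L z1 < Zf M E H L z2); [|lra].
  apply Zf_incr; try lra. intros. apply (P_right M H L (4*M) z1); auto; lra.
- assert (Zf M E H L z2 < Zf M E H L z1); [|lra].
  apply Zf_incr; try lra. intros. apply (P_right M H L (4*M) z2); auto; lra.
Qed.

Lemma Cp_cont M E H L : continuity (Cp M E H L).
Proof. intro. unfold Cp. reg. Qed.

Lemma mCp_cont M E H L : continuity (fun r => - Cp M E H L r).
Proof. intro. unfold Cp. reg. Qed.

Lemma rm_ex M E H L : 0 < M -> LambdaE M E H L -> exists z, rmS M E H L z.
Proof. intros HM HE.
destruct (LE_facts M E H L) as (F1 & F2 & F3 & F4 & F5 & F6 & F7 & F8 & F9 & F10 & F11); auto.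
destruct (IVT _ (4*M) (r0 M H L) (mCp_cont M E H L)) as [z [Hz1 Hz2]]; try lra.
exists z.
assert (z <> 4*M) by (intro; subst; lra).
assert (z <> r0 M H L) by (intro; subst; lra).
split; [lra|]. split; [|lra].
apply (P_conv0 M H L (4*M) (r0 M H L)); auto; lra.
Qed.

Lemma rp_ex M E H L : 0 < M -> LambdaE M E H L -> exists z, rpS M E H L z.
Proof. intros HM HE.
destruct (LE_facts M E H L) as (F1 & F2 & F3 & F4 & F5 & F6 & F7 & F8 & F9 & F10 & F11); auto.
set (R0 := r0 M H L) in *.
set (R := R0 + 4*(-H)*M/(2*(-H) - E^2)).
assert (HR1 : 0 < 4*(-H)*M/(2*(-H) - E^2)) by (apply Rdiv_lt_0_compat; nra).
assert (HR2 : (2*(-H) - E^2)*R - 4*(-H)*M = (2*(-H) - E^2)*R0) by (unfold R; field; lra).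
assert (HRR : R0 < R) by (unfold R; lra). clearbody R.
assert (HCR : 0 < Cp M E H L R).
{ unfold Cp.
  assert (0 <= L^2*(R-2*M)) by (apply Rmult_le_pos; nra).
  assert (0 < R^2*((2*(-H) - E^2)*R - 4*(-H)*M)) by (rewrite HR2; apply Rmult_lt_0_compat; [apply pow_lt|apply Rmult_lt_0_compat]; lra).
  replace ((L ^ 2 - 2 * H * R ^ 2) * (R - 2 * M) - E ^ 2 * R ^ 3) with
    (L^2*(R-2*M) + R^2*((2*(-H) - E^2)*R - 4*(-H)*M)) by ring. lra. }
destruct (IVT _ R0 R (Cp_cont M E H L)) as [z [Hz1 Hz2]]; try lra.
exists z.
assert (z <> R0) by (intro; subst; lra).
split; [lra|]. split; [|lra].
unfold R0 in *. apply (P_gt_r0 M H L z); auto; lra.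
Qed.


Lemma ev_pos c0 c1 c2 H0 L0 : 0 < c0 + c1*H0 + c2*L0^2 ->
  exists d, 0 < d /\ forall H L, Rabs (H-H0) < d -> Rabs (L-L0) < d -> 0 < c0 + c1*H + c2*L^2.
Proof. intros Hv. set (v := c0 + c1*H0 + c2*L0^2) in *.
set (K := Rabs c1 + Rabs c2 * (2*Rabs L0 + 1) + 1).
assert (HK : 0 < K) by (unfold K; pose proof (Rabs_pos c1); pose proof (Rabs_pos c2); pose proof (Rabs_pos L0); nra).
exists (Rmin 1 (v/(2*K))). split.
{ apply Rmin_pos; [lra|]. apply Rdiv_lt_0_compat; lra. }
intros H L h1 h2.
set (d := Rmin 1 (v / (2 * K))) in *.
assert (d1 : d <= 1) by apply Rmin_l.
assert (d2 : d <= v/(2*K)) by apply Rmin_r.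
assert (d3 : d*K <= v/2).
{ assert (hh : d*K <= v/(2*K)*K) by (apply Rmult_le_compat_r; lra).
  replace (v/(2*K)*K) with (v/2) in hh by (field; lra). auto. }
assert (Eq : c0 + c1*H + c2*L^2 = v + c1*(H-H0) + c2*((L-L0)*(L+L0))) by (unfold v; ring).
assert (B1 : Rabs (c1*(H-H0)) <= Rabs c1 * d) by (rewrite Rabs_mult; apply Rmult_le_compat_l; [apply Rabs_pos|lra]).
assert (B2 : Rabs (L+L0) <= 2*Rabs L0 + 1).
{ replace (L+L0) with ((L-L0) + 2*L0) by ring. eapply Rle_trans; [apply Rabs_triang|].
  rewrite Rabs_mult, (Rabs_right 2) by lra. lra. }
assert (B3 : Rabs (c2*((L-L0)*(L+L0))) <= Rabs c2 * (d * (2*Rabs L0 + 1))).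
{ rewrite !Rabs_mult. apply Rmult_le_compat_l; [apply Rabs_pos|].
  apply Rmult_le_compat; try apply Rabs_pos; lra. }
assert (hd0 : 0 < d) by (unfold d; apply Rmin_pos; [lra|]; apply Rdiv_lt_0_compat; lra).
assert (Rabs c1 * d + Rabs c2 * (d * (2*Rabs L0 + 1)) < d*K) by (replace (d*K) with (Rabs c1 * d + Rabs c2 * (d*(2*Rabs L0+1)) + d) by (unfold K; ring); lra).
pose proof (Rle_abs (- (c1*(H-H0)))). pose proof (Rle_abs (- (c2*((L-L0)*(L+L0))))).
rewrite Rabs_Ropp in *. lra.
Qed.

Lemma wrap (g : R -> R -> R) (S : R -> R -> Prop) H0 L0 :
  (forall eps, 0 < eps -> exists d, 0 < d /\ forall H L, Rabs (H-H0) < d -> Rabs (L-L0) < d ->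
      S H L -> Rabs (g H L - g H0 L0) < eps) ->
  filterlim (fun p : R * R => g (fst p) (snd p))
    (within (fun p : R * R => S (fst p) (snd p)) (locally (H0, L0))) (locally (g H0 L0)).
Proof. intros Hc P [eps HP].
destruct (Hc eps (cond_pos eps)) as [d [Hd Hd2]].
exists (mkposreal d Hd). intros [H L] Hb HS. apply HP.
destruct Hb as [b1 b2]. simpl in *.
unfold ball in *; simpl in *; unfold AbsRing_ball, abs, minus, plus, opp in *; simpl in *.
apply Hd2; auto.
Qed.


Definition rmf M E H L := epsilon (inhabits 0) (rmS M E H L).
Definition rpf M E H L := epsilon (inhabits 0) (rpS M E H L).

Lemma rm_spec M E H L : 0 < M -> LambdaE M E H L -> rmS M E H L (rmf M E H L).
Proof. intros. unfold rmf. apply epsilon_spec, rm_ex; auto. Qed.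
Lemma rp_spec M E H L : 0 < M -> LambdaE M E H L -> rpS M E H L (rpf M E H L).
Proof. intros. unfold rpf. apply epsilon_spec, rp_ex; auto. Qed.

Lemma rm_lt M E H L : 0 < M -> LambdaE M E H L -> rmf M E H L < r0 M H L.
Proof. intros HM HE. destruct (rm_spec M E H L HM HE) as (A1 & A2 & A3).
destruct (LE_facts M E H L) as (F1 & F2 & F3 & F4 & F5 & F6 & F7 & F8 & F9 & F10 & F11); auto.
destruct (Rtotal_order (rmf M E H L) (r0 M H L)) as [h|[h|h]]; auto.
- rewrite h in A2. lra.
- assert (0 < Pp M H L (rmf M E H L)) by (apply (P_gt_r0 M H L); auto). lra.
Qed.

Lemma rp_gt M E H L : 0 < M -> LambdaE M E H L -> r0 M H L < rpf M E H L.
Proof. intros HM HE. destruct (rp_spec M E H L HM HE) as (A1 & A2 & A3).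
destruct (LE_facts M E H L) as (F1 & F2 & F3 & F4 & F5 & F6 & F7 & F8 & F9 & F10 & F11); auto.
destruct (Rtotal_order (rpf M E H L) (r0 M H L)) as [h|[h|h]]; auto.
- assert (Pp M H L (rpf M E H L) < 0) by (apply (P_conv0 M H L (4*M) (r0 M H L)); auto; lra). lra.
- rewrite h in A2. lra.
Qed.

Lemma part3_pt M E H L : 0 < M -> LambdaE M E H L ->
        0 < rmf M E H L /\ 0 < rpf M E H L /\
        rmf M E H L < r0 M H L < rpf M E H L /\
        Zf M E H L (rmf M E H L) = 0 /\ Zf M E H L (rpf M E H L) = 0 /\
        (forall r : R, rmf M E H L <= r <= rpf M E H L -> r <> r0 M H L ->
           0 < Derive (Zf M E H L) r * (r - r0 M H L)).
Proof. intros HM HE.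
destruct (rm_spec M E H L HM HE) as (A1 & A2 & A3).
destruct (rp_spec M E H L HM HE) as (B1 & B2 & B3).
pose proof (rm_lt M E H L HM HE). pose proof (rp_gt M E H L HM HE).
destruct (LE_facts M E H L) as (F1 & F2 & F3 & F4 & F5 & F6 & F7 & F8 & F9 & F10 & F11); auto.
split; [lra|]. split; [lra|]. split; [lra|].
split; [apply C_Zf0; auto; lra|]. split; [apply C_Zf0; auto; lra|].
intros r Hr Hr0. rewrite Derive_Zf by lra.
assert (0 < r^4) by (apply pow_lt; lra).
destruct (Rtotal_order r (r0 M H L)) as [h|[h|h]]; [|lra|].
- assert (Pp M H L r < 0) by (apply (P_conv0 M H L (4*M) (r0 M H L)); auto; lra).
  assert (Pp M H L r / r^4 < 0) by (unfold Rdiv; assert (0 < / r^4) by (apply Rinv_0_lt_compat; auto); nra).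
  nra.
- assert (0 < Pp M H L r) by (apply (P_gt_r0 M H L); auto).
  assert (0 < Pp M H L r / r^4) by (apply Rdiv_lt_0_compat; auto).
  nra.
Qed.


Lemma C_of_Zf M E H L r : 0 < r -> Cp M E H L r = 2*r^3 * Zf M E H L r.
Proof. intros. rewrite Zf_C by lra. field. lra. Qed.

Lemma dmin4 d1 d2 d3 d4 : 0 < d1 -> 0 < d2 -> 0 < d3 -> 0 < d4 ->
  let d := Rmin (Rmin d1 d2) (Rmin d3 d4) in 0 < d /\ d <= d1 /\ d <= d2 /\ d <= d3 /\ d <= d4.
Proof. intros. unfold d. 
pose proof (Rmin_l (Rmin d1 d2) (Rmin d3 d4)). pose proof (Rmin_r (Rmin d1 d2) (Rmin d3 d4)).
pose proof (Rmin_l d1 d2). pose proof (Rmin_r d1 d2). pose proof (Rmin_l d3 d4). pose proof (Rmin_r d3 d4).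
split; [repeat apply Rmin_pos; auto|]. repeat split; lra. Qed.

Lemma rm_core M E H0 L0 eps : 0 < M -> LambdaE M E H0 L0 -> 0 < eps ->
  exists d, 0 < d /\ forall H L, Rabs (H-H0) < d -> Rabs (L-L0) < d ->
      LambdaE M E H L -> Rabs (rmf M E H L - rmf M E H0 L0) < eps.
Proof. intros HM HE0 Heps.
destruct (rm_spec M E H0 L0 HM HE0) as (A1 & A2 & A3).
pose proof (rm_lt M E H0 L0 HM HE0) as Hlt.
destruct (LE_facts M E H0 L0) as (F1 & F2 & F3 & F4 & F5 & F6 & F7 & F8 & F9 & F10 & F11); auto.
set (rho := rmf M E H0 L0) in *. set (R0 := r0 M H0 L0) in *.
set (e1 := Rmin (eps/2) ((rho - 4*M)/2)).
set (e2 := Rmin (eps/2) ((R0 - rho)/2)).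
assert (e1p : 0 < e1) by (apply Rmin_pos; lra).
assert (e2p : 0 < e2) by (apply Rmin_pos; lra).
assert (e1a : e1 <= eps/2) by apply Rmin_l. assert (e1b : e1 <= (rho - 4*M)/2) by apply Rmin_r.
assert (e2a : e2 <= eps/2) by apply Rmin_l. assert (e2b : e2 <= (R0 - rho)/2) by apply Rmin_r.
clearbody e1 e2.
set (a := rho - e1). set (b := rho + e2).
assert (Pneg : forall c, 4*M <= c <= b -> Pp M H0 L0 c < 0).
{ intros. apply (P_conv0 M H0 L0 (4*M) R0); auto; unfold b in *; lra. }
assert (Za : 0 < Zf M E H0 L0 a).
{ rewrite <- (C_Zf0 M E H0 L0 rho) by lra. apply Zf_decr; unfold a; try lra. intros; apply Pneg; unfold b; lra. }
assert (Zb : Zf M E H0 L0 b < 0).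
{ rewrite <- (C_Zf0 M E H0 L0 rho) by lra. apply Zf_decr; unfold b; try lra. intros; apply Pneg; unfold b; lra. }
assert (Ca : 0 < Cp M E H0 L0 a).
{ rewrite C_of_Zf by (unfold a; lra). assert (0 < a^3) by (apply pow_lt; unfold a; lra). nra. }
assert (Cb : Cp M E H0 L0 b < 0).
{ rewrite C_of_Zf by (unfold b; lra). assert (0 < b^3) by (apply pow_lt; unfold b; lra). nra. }
assert (Pa : Pp M H0 L0 a < 0) by (apply Pneg; unfold a, b; lra).
assert (Pb : Pp M H0 L0 b < 0) by (apply Pneg; unfold b; lra).
destruct (ev_pos (-E^2*a^3) (-2*a^2*(a-2*M)) (a-2*M) H0 L0) as [d1 [hd1 Hd1]].
{ replace (-E^2*a^3 + -2*a^2*(a-2*M)*H0 + (a-2*M)*L0^2) with (Cp M E H0 L0 a) by (unfold Cp; ring). lra. }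
destruct (ev_pos (E^2*b^3) (2*b^2*(b-2*M)) (-(b-2*M)) H0 L0) as [d2 [hd2 Hd2]].
{ replace (E^2*b^3 + 2*b^2*(b-2*M)*H0 + -(b-2*M)*L0^2) with (- Cp M E H0 L0 b) by (unfold Cp; ring). lra. }
destruct (ev_pos 0 (2*M*a^2) (a-3*M) H0 L0) as [d3 [hd3 Hd3]].
{ replace (0 + 2*M*a^2*H0 + (a-3*M)*L0^2) with (- Pp M H0 L0 a) by (unfold Pp; ring). lra. }
destruct (ev_pos 0 (2*M*b^2) (b-3*M) H0 L0) as [d4 [hd4 Hd4]].
{ replace (0 + 2*M*b^2*H0 + (b-3*M)*L0^2) with (- Pp M H0 L0 b) by (unfold Pp; ring). lra. }
destruct (dmin4 d1 d2 d3 d4 hd1 hd2 hd3 hd4) as (dp & dd1 & dd2 & dd3 & dd4).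
eexists; split; [exact dp|].
intros H L h1 h2 HE.
destruct (LE_facts M E H L) as (G1 & _); auto.
assert (Ca' : 0 < Cp M E H L a).
{ replace (Cp M E H L a) with (-E^2*a^3 + -2*a^2*(a-2*M)*H + (a-2*M)*L^2) by (unfold Cp; ring). apply Hd1; lra. }
assert (Cb' : Cp M E H L b < 0).
{ assert (0 < E^2*b^3 + 2*b^2*(b-2*M)*H + -(b-2*M)*L^2) by (apply Hd2; lra).
  replace (Cp M E H L b) with (-(E^2*b^3 + 2*b^2*(b-2*M)*H + -(b-2*M)*L^2)) by (unfold Cp; ring). lra. }
assert (Pa' : Pp M H L a < 0).
{ assert (0 < 0 + 2*M*a^2*H + (a-3*M)*L^2) by (apply Hd3; lra).
  replace (Pp M H L a) with (-(0 + 2*M*a^2*H + (a-3*M)*L^2)) by (unfold Pp; ring). lra. }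
assert (Pb' : Pp M H L b < 0).
{ assert (0 < 0 + 2*M*b^2*H + (b-3*M)*L^2) by (apply Hd4; lra).
  replace (Pp M H L b) with (-(0 + 2*M*b^2*H + (b-3*M)*L^2)) by (unfold Pp; ring). lra. }
destruct (IVT _ a b (mCp_cont M E H L)) as [z [Hz1 Hz2]]; [unfold a, b; lra | cbv beta; lra | cbv beta; lra |].
assert (Sz : rmS M E H L z).
{ split; [unfold a in *; lra|]. split; [|lra]. apply (P_conv M H L a b); auto. }
rewrite (rm_uniq M E H L (rmf M E H L) z HM HE (rm_spec M E H L HM HE) Sz).
apply Rabs_def1; unfold a, b in *; lra.
Qed.


Lemma rp_core M E H0 L0 eps : 0 < M -> LambdaE M E H0 L0 -> 0 < eps ->
  exists d, 0 < d /\ forall H L, Rabs (H-H0) < d -> Rabs (L-L0) < d ->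
      LambdaE M E H L -> Rabs (rpf M E H L - rpf M E H0 L0) < eps.
Proof. intros HM HE0 Heps.
destruct (rp_spec M E H0 L0 HM HE0) as (A1 & A2 & A3).
pose proof (rp_gt M E H0 L0 HM HE0) as Hgt.
destruct (LE_facts M E H0 L0) as (F1 & F2 & F3 & F4 & F5 & F6 & F7 & F8 & F9 & F10 & F11); auto.
set (rho := rpf M E H0 L0) in *.
set (e1 := Rmin (eps/2) ((rho - r0 M H0 L0)/2)).
assert (e1p : 0 < e1) by (apply Rmin_pos; lra).
assert (e1a : e1 <= eps/2) by apply Rmin_l. assert (e1b : e1 <= (rho - r0 M H0 L0)/2) by apply Rmin_r.
clearbody e1.
set (a := rho - e1). set (b := rho + eps/2).
assert (Ppos : forall c, a <= c -> 0 < Pp M H0 L0 c).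
{ intros. apply (P_gt_r0 M H0 L0); auto; unfold a in *; lra. }
assert (Za : Zf M E H0 L0 a < 0).
{ rewrite <- (C_Zf0 M E H0 L0 rho) by lra. apply Zf_incr; unfold a; try lra. intros; apply Ppos; unfold a; lra. }
assert (Zb : 0 < Zf M E H0 L0 b).
{ rewrite <- (C_Zf0 M E H0 L0 rho) by lra. apply Zf_incr; unfold b; try lra. intros; apply Ppos; unfold a; lra. }
assert (Ca : Cp M E H0 L0 a < 0).
{ rewrite C_of_Zf by (unfold a; lra). assert (0 < a^3) by (apply pow_lt; unfold a; lra). nra. }
assert (Cb : 0 < Cp M E H0 L0 b).
{ rewrite C_of_Zf by (unfold b; lra). assert (0 < b^3) by (apply pow_lt; unfold b; lra). nra. }
assert (Pa : 0 < Pp M H0 L0 a) by (apply Ppos; lra).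
destruct (ev_pos (E^2*a^3) (2*a^2*(a-2*M)) (-(a-2*M)) H0 L0) as [d1 [hd1 Hd1]].
{ replace (E^2*a^3 + 2*a^2*(a-2*M)*H0 + -(a-2*M)*L0^2) with (- Cp M E H0 L0 a) by (unfold Cp; ring). lra. }
destruct (ev_pos (-E^2*b^3) (-2*b^2*(b-2*M)) (b-2*M) H0 L0) as [d2 [hd2 Hd2]].
{ replace (-E^2*b^3 + -2*b^2*(b-2*M)*H0 + (b-2*M)*L0^2) with (Cp M E H0 L0 b) by (unfold Cp; ring). lra. }
destruct (ev_pos 0 (-2*M*a^2) (3*M-a) H0 L0) as [d3 [hd3 Hd3]].
{ replace (0 + -2*M*a^2*H0 + (3*M-a)*L0^2) with (Pp M H0 L0 a) by (unfold Pp; ring). lra. }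
destruct (dmin4 d1 d2 d3 d3 hd1 hd2 hd3 hd3) as (dp & dd1 & dd2 & dd3 & _).
eexists; split; [exact dp|].
intros H L h1 h2 HE.
destruct (LE_facts M E H L) as (G1 & _ & _ & _ & G5 & _); auto.
assert (Ca' : Cp M E H L a < 0).
{ assert (0 < E^2*a^3 + 2*a^2*(a-2*M)*H + -(a-2*M)*L^2) by (apply Hd1; lra).
  replace (Cp M E H L a) with (-(E^2*a^3 + 2*a^2*(a-2*M)*H + -(a-2*M)*L^2)) by (unfold Cp; ring). lra. }
assert (Cb' : 0 < Cp M E H L b).
{ replace (Cp M E H L b) with (-E^2*b^3 + -2*b^2*(b-2*M)*H + (b-2*M)*L^2) by (unfold Cp; ring). apply Hd2; lra. }
assert (Pa' : 0 < Pp M H L a).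
{ replace (Pp M H L a) with (0 + -2*M*a^2*H + (3*M-a)*L^2) by (unfold Pp; ring). apply Hd3; lra. }
destruct (IVT _ a b (Cp_cont M E H L)) as [z [Hz1 Hz2]]; [unfold a, b; lra | lra | lra |].
assert (Sz : rpS M E H L z).
{ split; [unfold a in *; lra|]. split; [|lra]. apply (P_right M H L (4*M) a); auto; unfold a in *; lra. }
rewrite (rp_uniq M E H L (rpf M E H L) z HM HE (rp_spec M E H L HM HE) Sz).
apply Rabs_def1; unfold a, b in *; lra.
Qed.

Theorem proposition4p3 (M E : R) (hM : 0 < M) (hE : sqrt (25/27) < E < 1) :
  (forall H L : R,
     LambdaE M E H L <->
     (- (27/50) * E^2 < H < - / 2 * E^2 /\
      4 * sqrt 2 * sqrt (- H) * M < L < sqrt (- H) * M * zeta_inv (E^2 / (- 2 * H))))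
  /\
  (forall H L : R, LambdaE M E H L ->
     Zf M E H L (r0 M H L) < 0 /\
     Derive (Zf M E H L) (r0 M H L) = 0 /\
     0 < Derive (Derive (Zf M E H L)) (r0 M H L))
  /\
  (exists rm rp : R -> R -> R,
     (forall H L : R, LambdaE M E H L ->
        0 < rm H L /\ 0 < rp H L /\
        rm H L < r0 M H L < rp H L /\
        Zf M E H L (rm H L) = 0 /\ Zf M E H L (rp H L) = 0 /\
        (forall r : R, rm H L <= r <= rp H L -> r <> r0 M H L ->
           0 < Derive (Zf M E H L) r * (r - r0 M H L)))
     /\
     (forall H L : R, LambdaE M E H L ->
        filterlim (fun p : R * R => rm (fst p) (snd p))
          (within (fun p : R * R => LambdaE M E (fst p) (snd p)) (locally (H, L)))
          (locally (rm H L)))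
     /\
     (forall H L : R, LambdaE M E H L ->
        filterlim (fun p : R * R => rp (fst p) (snd p))
          (within (fun p : R * R => LambdaE M E (fst p) (snd p)) (locally (H, L)))
          (locally (rp H L)))).
Proof.
split; [intros; apply part1; auto|].
split; [intros; apply part2; auto|].
exists (rmf M E), (rpf M E).
split; [intros; apply part3_pt; auto|].
split; intros H L HE; apply (wrap _ (LambdaE M E)); intros eps Heps.
- apply rm_core; auto.
- apply rp_core; auto.
Qed.
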